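(* Let $X$ be a space with $|X|<\mathfrak{d}$. (a) If $X$ is absolutely strongly star-Lindelöf, then $X$ is selectively strongly star-Menger. (b) If $X$ is absolutely Star-$\sigma$-cd, then $X$ is strongly selectively $(a)$.
   Context: All spaces are regular. $St(A,\mathcal{U})=\bigcup\{U\in\mathcal{U}:U\cap A\neq\emptyset\}$. $\mathfrak{d}$ is the dominating number. $X$ is absolutely strongly star-Lindelöf if for every open cover $\mathcal{U}$ and every dense $D\subseteq X$ there is a countable $C\subseteq D$ with $St(C,\mathcal{U})=X$. $X$ is selectively strongly star-Menger if for every sequence $(\mathcal{U}_n:n\in\omega)$ of open covers and every sequence $(D_n:n\in\omega)$ of dense subsets there are finite $F_n\subseteq D_n$ with $\{St(F_n,\mathcal{U}_n):n\in\omega\}$ covering $X$. $X$ is absolutely Star-$\sigma$-cd if for every dense $D\subseteq X$ and every open cover $\mathcal{U}$ there is $K\subseteq D$ which is a countable union of closed discrete subsets of $X$ with $St(K,\mathcal{U})=X$. $X$ is strongly selectively $(a)$ if for every sequence $(\mathcal{U}_n)$ of open covers and every sequence $(D_n)$ of dense subsets there are sets $C_n\subseteq D_n$, each closed and discrete in $X$, with $\{St(C_n,\mathcal{U}_n):n\in\omega\}$ covering $X$. *)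

(* Defs.v *)
From HB Require Import structures.
From mathcomp Require Import all_boot all_order all_algebra.
From mathcomp Require Import all_classical all_reals all_analysis.
Set Implicit Arguments. Unset Strict Implicit. Unset Printing Implicit Defensive.
Local Open Scope classical_set_scope.

Definition eventually_le (g h : nat -> nat) : Prop :=
  exists N : nat, forall n : nat, (N <= n)%N -> (g n <= h n)%N.

Definition dominating_family (F : set (nat -> nat)) : Prop :=
  forall g : nat -> nat, exists h, F h /\ eventually_le g h.

(* |T| < d : no family of functions indexed by T (hence of size <= |T|)
   is dominating; d = min size of a dominating family. *)
Definition card_lt_dominating (T : Type) : Prop :=
  forall f : T -> (nat -> nat), ~ dominating_family (range f).

Section Star.
Context {T : topologicalType}.

Definition open_cover (U : set (set T)) : Prop :=
  (forall u, U u -> open u) /\ (forall x : T, exists u, U u /\ u x).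

Definition St (A : set T) (U : set (set T)) : set T :=
  [set x | exists u, U u /\ u `&` A !=set0 /\ u x].

Definition closed_discrete (C : set T) : Prop :=
  closed C /\
  forall x, C x -> exists V : set T, open V /\ V x /\ V `&` C = [set x].

Definition abs_strongly_star_Lindelof : Prop :=
  forall (U : set (set T)) (D : set T), open_cover U -> dense D ->
    exists C : set T, C `<=` D /\ countable C /\ St C U = setT.

Definition selectively_strongly_star_Menger : Prop :=
  forall (U : nat -> set (set T)) (D : nat -> set T),
    (forall n, open_cover (U n)) -> (forall n, dense (D n)) ->
    exists F : nat -> set T,
      (forall n, F n `<=` D n /\ finite_set (F n)) /\
      (forall x : T, exists n, St (F n) (U n) x).

Definition abs_Star_sigma_cd : Prop :=
  forall (D : set T) (U : set (set T)), dense D -> open_cover U ->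
    exists K : set T, K `<=` D /\
      (exists C : nat -> set T, (forall n, closed_discrete (C n)) /\
         K = \bigcup_n C n) /\
      St K U = setT.

Definition strongly_selectively_a : Prop :=
  forall (U : nat -> set (set T)) (D : nat -> set T),
    (forall n, open_cover (U n)) -> (forall n, dense (D n)) ->
    exists C : nat -> set T,
      (forall n, C n `<=` D n /\ closed_discrete (C n)) /\
      (forall x : T, exists n, St (C n) (U n) x).

End Star.

(* Main.v *)
Require Import Defs.
From HB Require Import structures.
From mathcomp Require Import all_boot all_order all_algebra.
From mathcomp Require Import all_classical all_reals all_analysis.
Local Open Scope classical_set_scope.

Section Helpers.
Context {T : topologicalType}.

Lemma St_mono (A B : set T) (U : set (set T)) : A `<=` B -> St A U `<=` St B U.
Proof.
move=> AB x [u [Uu [[c [uc Ac]] ux]]]; exists u; split => //; split => //.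
by exists c; split => //; apply: AB.
Qed.

Lemma cd_setU (A B : set T) : closed_discrete A -> closed_discrete B ->
  closed_discrete (A `|` B).
Proof.
move=> [cA dA] [cB dB]; split; first exact: closedU.
have key : forall (X Y : set T), closed Y ->
   (forall x, X x -> exists V : set T, open V /\ V x /\ V `&` X = [set x]) ->
   (forall x, Y x -> exists V : set T, open V /\ V x /\ V `&` Y = [set x]) ->
   forall x, X x -> exists V : set T, open V /\ V x /\ V `&` (X `|` Y) = [set x].
  move=> X Y cY dX dY x Xx.
  have [VX [oX [VXx EX]]] := dX x Xx.
  have [Yx|nYx] := pselect (Y x).
    have [VY [oY [VYx EY]]] := dY x Yx.
    exists (VX `&` VY); split; first exact: openI.
    split; first by split.
    apply/seteqP; split => [y [[Vy Wy] [Xy|Yy]]|y ->].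
    - have : (VX `&` X) y by split.
      by rewrite EX.
    - have : (VY `&` Y) y by split.
      by rewrite EY.
    - by split; [split|left].
  exists (VX `&` ~` Y); split; first by apply: openI => //; rewrite openC.
  split; first by split.
  apply/seteqP; split => [y [[Vy nY] [Xy|Yy]]|y ->].
  - have : (VX `&` X) y by split.
      by rewrite EX.
  - by [].
  - by split; [split|left].
move=> x [Ax|Bx]; first exact: key.
have [V [oV [Vx E]]] := key B A cA dB dA x Bx.
by exists V; split => //; split => //; rewrite setUC.
Qed.

Fixpoint cu (C : nat -> set T) (m : nat) : set T :=
  match m with 0 => C 0%N | S k => cu C k `|` C k.+1 end.

Lemma cu_cd C m : (forall k, closed_discrete (C k)) -> closed_discrete (cu C m).
Proof. by move=> H; elim: m => [|m IH] //=; apply: cd_setU. Qed.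

Lemma cu_sub C m (D : set T) : (forall k, C k `<=` D) -> cu C m `<=` D.
Proof. by move=> H; elim: m => [|m IH] //= x [/IH|/H]. Qed.

Lemma cu_ge C m k : (k <= m)%N -> C k `<=` cu C m.
Proof.
elim: m => [|m IH]; first by rewrite leqn0 => /eqP ->.
rewrite leq_eqVlt => /orP [/eqP -> x Cx|km x Cx]; first by right.
by left; apply: IH.
Qed.

End Helpers.

Lemma not_dom_ex (T : Type) (f : T -> nat -> nat) :
  card_lt_dominating T -> card_lt_dominating T ->
  exists g : nat -> nat, forall x, exists n, (f x n < g n)%N.
Proof.
move=> H _; have := H f; rewrite /dominating_family => /existsNP [g Hg].
exists g => x; apply: contrapT => Hn; apply: Hg; exists (f x); split.
  by exists x.
exists 0%N => n _; rewrite leqNgt; apply/negP => lt; apply: Hn; by exists n.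
Qed.

Theorem mainTheorem4 (T : topologicalType) :
  accessible_space T -> regular_space T ->
  card_lt_dominating T ->
  (@abs_strongly_star_Lindelof T -> @selectively_strongly_star_Menger T) /\
  (@abs_Star_sigma_cd T -> @strongly_selectively_a T).
Proof.
move=> _ _ Hd; split.
- move=> H U D HU HD.
  have /choice [C HC] := fun n => H (U n) (D n) (HU n) (HD n).
  have /choice [code Hcode] : forall n, exists f : T -> nat, {in C n &, injective f}.
    by move=> n; apply/countable_injP; case: (HC n) => _ [].
  have /choice [pick Hpick] : forall x, exists h : nat -> T, forall n,
      C n (h n) /\ St [set h n] (U n) x.
    move=> x; suff /choice [h Hh] : forall n, exists c, C n c /\ St [set c] (U n) x.
      by exists h.
    move=> n; have : St (C n) (U n) x by case: (HC n) => _ [_ ->].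
    move=> [u [Uu [[c [uc Cc]] ux]]]; exists c; split => //.
    by exists u; split => //; split => //; exists c.
  have [g Hg] := not_dom_ex _ (fun x n => code n (pick x n)) Hd Hd.
  exists (fun n => [set c | C n c /\ (code n c <= g n)%N]); split.
    move=> n; split; first by move=> c [Cc _]; case: (HC n) => /(_ c Cc).
    apply: (@card_le_finite _ _ _ `I_(g n).+1) => //.
    apply/pcard_leP/injfunPex; exists (code n).
      by move=> c [_ le] /=; rewrite ltnS.
    by move=> a b; rewrite !inE => -[Ca _] [Cb _]; apply: Hcode; rewrite inE.
  move=> x; have [n lt] := Hg x; exists n.
  have [Cp Sp] := Hpick x n.
  move: Sp; apply: (@St_mono T [set pick x n]) => c -> /=; split => //; exact: (ltnW lt).
- move=> H U D HU HD.
  have /choice [K HK] := fun n => H (D n) (U n) (HD n) (HU n).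
  have /choice [C HC] : forall n, exists C : nat -> set T,
      (forall m, closed_discrete (C m)) /\ K n = \bigcup_m C m.
    by move=> n; case: (HK n) => _ [].
  have /choice [pm Hpm] : forall x, exists h : nat -> nat, forall n,
      St (C n (h n)) (U n) x.
    move=> x; suff /choice [h Hh] : forall n, exists m, St (C n m) (U n) x.
      by exists h.
    move=> n; have : St (K n) (U n) x by case: (HK n) => _ [_ ->].
    move=> [u [Uu [[c [uc Kc]] ux]]].
    move: Kc; rewrite (proj2 (HC n)) => -[m _ Cc]; exists m.
    by exists u; split => //; split => //; exists c.
  have [g Hg] := not_dom_ex _ (pm) Hd Hd.
  exists (fun n => cu (C n) (g n)); split.
    move=> n; split; last exact: cu_cd (proj1 (HC n)).
    apply: cu_sub => k y Cy; case: (HK n) => + _; apply.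
    by rewrite (proj2 (HC n)); exists k.
  move=> x; have [n lt] := Hg x; exists n.
  by move: (Hpm x n); apply: (@St_mono T (C n (pm x n))); apply: cu_ge; exact: (ltnW lt).
Qed.
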